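(* Let $D$ be an integral domain with quotient field $K$, let $L$ be a field extension of $K$, and let $R=D+XL[X]$ and $R'=D+XL[[X]]$, where $X$ is an indeterminate. (1) If $D$ is a field, then $R$ and $R'$ are completely atomic domains. (2) If $D$ is not a field and $D$ is atomic, then $R$ and $R'$ are completely atomic domains.
   Context: An atom (irreducible element) of an integral domain is a nonzero nonunit $a$ such that $a=bc$ implies $b$ or $c$ is a unit. A nonzero nonunit is atomic if it is a finite product of atoms; a domain is atomic if every nonzero nonunit is atomic. A domain is completely atomic if every nonunit divisor of an atomic element is atomic. *)

(* Defs.v *)
From HB Require Import structures.
From mathcomp Require Import all_boot all_order all_algebra.
Set Implicit Arguments. Unset Strict Implicit. Unset Printing Implicit Defensive.
Import GRing.Theory.
Local Open Scope ring_scope.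

(* Units, atoms, divisibility are all computed INSIDE S
   (witnesses must lie in S), so these are the notions of the domain S. *)
Section AtomicNotions.
Variables (T : Type) (mul : T -> T -> T) (one zero : T) (S : T -> Prop).

Definition unitIn (u : T) : Prop := S u /\ exists v, S v /\ mul u v = one.

Definition atomIn (a : T) : Prop :=
  [/\ S a, a <> zero, ~ unitIn a &
      forall b c, S b -> S c -> a = mul b c -> unitIn b \/ unitIn c].

Fixpoint allAtoms (s : seq T) : Prop :=
  if s is x :: s' then atomIn x /\ allAtoms s' else True.

Definition atomicElt (a : T) : Prop :=
  [/\ S a, a <> zero, ~ unitIn a &
      exists s : seq T, s <> [::] /\ allAtoms s /\ a = foldr mul one s].

Definition atomicDom : Prop :=
  forall a, S a -> a <> zero -> ~ unitIn a -> atomicElt a.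

Definition completelyAtomic : Prop :=
  forall a b c, atomicElt a -> S b -> S c -> a = mul b c -> ~ unitIn b ->
    atomicElt b.
End AtomicNotions.

Definition pseries (L : fieldType) := nat -> L.
Definition ps_mul (L : fieldType) (f g : pseries L) : pseries L :=
  fun n => \sum_(i < n.+1) f i * g (n - i)%N.
Definition ps_one (L : fieldType) : pseries L := fun n => if n == 0%N then 1 else 0.
Definition ps_zero (L : fieldType) : pseries L := fun _ => 0.

(* R = D + X L[X] : polynomials over L with constant term in D *)
Definition inDXLX (L : fieldType) (D : {pred L}) (p : {poly L}) : Prop := p`_0 \in D.
(* R' = D + X L[[X]] : power series over L with constant term in D *)
Definition inDXLXX (L : fieldType) (D : {pred L}) (f : pseries L) : Prop := f 0%N \in D.

Definition subfield_of (L : fieldType) (D : {pred L}) : Prop :=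
  forall x, x \in D -> x != 0 -> x^-1 \in D.

(* Main.v *)
Require Import Defs.
From HB Require Import structures.
From mathcomp Require Import all_boot all_order all_algebra.
From mathcomp Require Import zify.
From Stdlib Require Import Classical FunctionalExtensionality.
Set Implicit Arguments. Unset Strict Implicit. Unset Printing Implicit Defensive.
Import GRing.Theory.
Local Open Scope ring_scope.
Section Gen.
Variables (T : Type) (mul : T -> T -> T) (one zero : T) (S : T -> Prop).
Hypotheses (mulA : associative mul) (mul1 : left_id one mul)
  (mulr1 : right_id one mul) (mul0 : left_zero zero mul)
  (S1 : S one) (SM : forall x y, S x -> S y -> S (mul x y)).

Local Notation unit := (unitIn mul one S).
Local Notation atom := (atomIn mul one zero S).
Local Notation atomic := (atomicElt mul one zero S).
Local Notation atoms := (allAtoms mul one zero S).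

Lemma foldr_catG s1 s2 :
  foldr mul one (s1 ++ s2) = mul (foldr mul one s1) (foldr mul one s2).
Proof. by elim: s1 => [|x s IH] /=; [rewrite mul1 | rewrite IH mulA]. Qed.

Lemma atoms_cat s1 s2 : atoms s1 -> atoms s2 -> atoms (s1 ++ s2).
Proof. by elim: s1 => [|x s IH] //= [? ?] ?; split => //; apply: IH. Qed.

Lemma unitM_inv a b : unit (mul a b) -> S b -> unit a.
Proof.
move=> [_ [w [Sw e]]] Sb; split.
Abort.

Lemma atomicM a b : atomic a -> atomic b -> mul a b <> zero -> atomic (mul a b).
Proof.
move=> [Sa a0 ua [s1 [s10 [A1 e1]]]] [Sb b0 ub [s2 [s20 [A2 e2]]]] ab0.
split; [exact: SM | exact: ab0 | |].
- move=> [_ [w [Sw e]]]; apply: ua; split => //; exists (mul b w); split; first exact: SM.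
  by rewrite mulA.
- exists (s1 ++ s2); split; first by case: s1 s10 {A1 e1}.
  by split; [exact: atoms_cat | rewrite foldr_catG e1 e2].
Qed.

Lemma atom_atomic a : atom a -> atomic a.
Proof.
move=> A; case: (A) => Sa a0 ua _; split => //; exists [:: a]; split => //=; split => //; by rewrite mulr1.
Qed.

Lemma atomMu a u : atom a -> unit u -> atom (mul a u).
Proof.
move=> [Sa a0 ua H] [Su [v [Sv uv]]]; split.
- exact: SM.
- move=> e; apply: a0; by rewrite -[a]mulr1 -uv mulA e mul0.
- move=> [_ [w [Sw e]]]; apply: ua; split => //; exists (mul u w); split; first exact: SM.
  by rewrite mulA.
- move=> b c Sb Sc e.
  have : a = mul b (mul c v) by rewrite mulA -e -mulA uv mulr1.
  case/(H _ _ Sb (SM Sc Sv)) => [? | [_ [w [Sw e2]]]]; [by left|right].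
  split => //; exists (mul v w); split; first exact: SM.
  by rewrite mulA.
Qed.

Lemma not_atom a : S a -> a <> zero -> ~ unit a -> ~ atom a ->
  exists b c, [/\ S b, S c, a = mul b c, ~ unit b & ~ unit c].
Proof.
move=> Sa a0 ua na; apply: NNPP => H; apply: na; split => // b c Sb Sc e.
apply: NNPP => H2; apply: H; exists b, c; split => // => [ub|uc]; apply: H2; by [left|right].
Qed.

End Gen.

Section PS.
Variable L : fieldType.
Implicit Types f g h : pseries L.

Lemma ps_mul_poly f g n (P Q : {poly L}) :
  (forall i, (i <= n)%N -> f i = P`_i) -> (forall i, (i <= n)%N -> g i = Q`_i) ->
  ps_mul f g n = (P * Q)`_n.
Proof.
move=> hf hg; rewrite coefM /ps_mul; apply: eq_bigr => i _.
by rewrite hf ?hg // ?leq_subr // -ltnS.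
Qed.

Definition trunc f n : {poly L} := \poly_(i < n.+1) f i.
Lemma truncE f n i : (i <= n)%N -> (trunc f n)`_i = f i.
Proof. by move=> h; rewrite coef_poly ltnS h. Qed.

Lemma ps_mul_trunc f g n i : (i <= n)%N ->
  ps_mul f g i = (trunc f n * trunc g n)`_i.
Proof.
move=> h; apply: ps_mul_poly => j hj; rewrite truncE //; exact: leq_trans hj h.
Qed.

Lemma ps_mulA : associative (@ps_mul L).
Proof.
move=> f g h; apply: functional_extensionality => n.
rewrite (@ps_mul_poly _ _ n (trunc f n) (trunc g n * trunc h n)); last first.
- by move=> i hi; rewrite (ps_mul_trunc _ _ hi).
- by move=> i hi; rewrite truncE.
rewrite (@ps_mul_poly _ _ n (trunc f n * trunc g n) (trunc h n)) ?mulrA //.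
- by move=> i hi; rewrite (ps_mul_trunc _ _ hi).
- by move=> i hi; rewrite truncE.
Qed.

Lemma ps_mulC : commutative (@ps_mul L).
Proof.
move=> f g; apply: functional_extensionality => n.
rewrite (@ps_mul_poly _ _ n (trunc f n) (trunc g n)); try by move=> i hi; rewrite truncE.
rewrite mulrC -(@ps_mul_poly g f n (trunc g n) (trunc f n)) //; by move=> i hi; rewrite truncE.
Qed.

Lemma ps_oneE i : ps_one L i = (1 : {poly L})`_i.
Proof. by rewrite coef1 /ps_one; case: (i == 0)%N. Qed.

Lemma ps_mul1 : left_id (ps_one L) (@ps_mul L).
Proof.
move=> f; apply: functional_extensionality => n.
rewrite (@ps_mul_poly _ _ n 1 (trunc f n)) ?mul1r ?truncE //.
  by move=> i hi; rewrite ps_oneE.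
by move=> i hi; rewrite truncE.
Qed.

Lemma ps_mulr1 : right_id (ps_one L) (@ps_mul L).
Proof. by move=> f; rewrite ps_mulC ps_mul1. Qed.

Lemma ps_mul0 : left_zero (ps_zero L) (@ps_mul L).
Proof.
move=> f; apply: functional_extensionality => n.
by rewrite /ps_mul big1 // => i _; rewrite /ps_zero mul0r.
Qed.

Lemma ps_mul_0 f g : ps_mul f g 0 = f 0%N * g 0%N.
Proof. by rewrite /ps_mul big_ord1. Qed.

Definition psC (x : L) : pseries L := fun n => if n == 0%N then x else 0.

Lemma ps_mulC_l x g n : ps_mul (psC x) g n = x * g n.
Proof.
rewrite /ps_mul big_ord_recl /= subn0 big1 ?addr0 // => i _.
by rewrite /psC /= mul0r.
Qed.

Fixpoint ginv f (k n : nat) : L :=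
  match k with
  | 0 => (f 0%N)^-1
  | k'.+1 => if n == 0%N then (f 0%N)^-1 else
      - (f 0%N)^-1 * \sum_(i < n) f i.+1 * ginv f k' (n - i.+1)
  end.

Lemma ginv_stab f k : forall k' n, (n <= k)%N -> (n <= k')%N -> ginv f k n = ginv f k' n.
Proof.
elim: k => [|k IH] k' n.
  rewrite leqn0 => /eqP -> _; by case: k'.
case: n => [|n] hk hk'; first by case: k' hk'.
case: k' hk' => [//|k'] hk2 /=.
congr (_ * _); apply: eq_bigr => i _; congr (_ * _); apply: IH.
  by rewrite subSS (leq_trans (leq_subr _ _)).
by rewrite subSS (leq_trans (leq_subr _ _)).
Qed.

Definition psinv f : pseries L := fun n => ginv f n n.

Lemma psinvK f : f 0%N != 0 -> ps_mul f (psinv f) = ps_one L.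
Proof.
move=> f0; apply: functional_extensionality => n; case: n => [|n].
  by rewrite ps_mul_0 /psinv /= mulfV.
rewrite /ps_mul big_ord_recl /= subn0 /psinv /=.
rewrite mulrA mulrN mulfV // mulN1r.
rewrite [X in - X + _](_ : _ = \sum_(i < n.+1) f (bump 0 i) * ginv f (n.+1 - bump 0 i) (n.+1 - bump 0 i)).
  by rewrite addNr /ps_one.
apply: eq_bigr => i _; rewrite /bump /= add1n subSS; congr (_ * _).
apply: ginv_stab => //; exact: leq_subr.
Qed.

End PS.

Section PSD.
Variables (L : fieldType) (D : {pred L}) (hD : GRing.subring_closed D).

Let D1 : 1 \in D. Proof. by case: hD. Qed.
Let DM x y : x \in D -> y \in D -> x * y \in D.
Proof. by case: hD => _ _ h; apply: h. Qed.
Let D0 : 0 \in D. Proof. by case: hD => h1 h _; rewrite -(subrr 1); apply: h. Qed.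

Implicit Types f g a b c : pseries L.
Local Notation S := (inDXLXX D).
Local Notation U := (unitIn (@ps_mul L) (ps_one L) S).
Local Notation A := (atomIn (@ps_mul L) (ps_one L) (ps_zero L) S).
Local Notation AE := (atomicElt (@ps_mul L) (ps_one L) (ps_zero L) S).
Local Notation DU := (unitIn (@GRing.mul L) 1 (fun x => x \in D)).
Local Notation DA := (atomIn (@GRing.mul L) 1 0 (fun x => x \in D)).

Let SM f g : S f -> S g -> S (ps_mul f g).
Proof. rewrite /inDXLXX ps_mul_0; exact: DM. Qed.

Lemma ps_unitP f : S f -> U f <-> DU (f 0%N).
Proof.
move=> Sf; split.
- case=> _ [v [Sv e]]; split => //; exists (v 0%N); split => //.
  by rewrite -ps_mul_0 e.
- case=> _ [e [De fe]].
  have f0 : f 0%N != 0.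
    by apply/eqP => f0; move: fe; rewrite f0 mul0r => /eqP; rewrite eq_sym oner_eq0.
  split=> //; exists (psinv f); split; last exact: psinvK.
  rewrite /inDXLXX /psinv /=.
  have -> : (f 0%N)^-1 = e by rewrite -[e]mul1r -(mulVf f0) -mulrA fe mulr1.
  done.
Qed.

Lemma ps_nz f n : f n != 0 -> f <> ps_zero L.
Proof. by move=> h e; move: h; rewrite e /ps_zero eqxx. Qed.

Lemma atom_Datom g : S g -> DA (g 0%N) -> A g.
Proof.
move=> Sg [Dg g0 nu H]; split => //.
- by apply: (@ps_nz _ 0%N); apply/eqP.
- by move/(ps_unitP Sg).
- move=> b c Sb Sc e.
  have ge : g 0%N = b 0%N * c 0%N by rewrite e ps_mul_0.
  have := H _ _ Sb Sc ge.
  by case=> h; [left|right]; apply/ps_unitP.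
Qed.

Lemma field_unit f : subfield_of D -> S f -> f 0%N != 0 -> U f.
Proof.
move=> sf Sf f0; apply/(ps_unitP Sf); split => //; exists (f 0%N)^-1; split.
  exact: sf.
exact: mulfV.
Qed.

Lemma ps_low b c m : c 0%N = 0 -> (forall i, (i < m)%N -> b i = 0) -> ps_mul b c m = 0.
Proof.
move=> c0 hb; rewrite /ps_mul big_ord_recr /= subnn c0 mulr0 addr0 big1 // => i _.
by rewrite hb ?mul0r.
Qed.

Lemma field_atomic (sf : subfield_of D) n : forall f, S f -> ~ U f -> f n != 0 -> AE f.
Proof.
elim/ltn_ind: n => n IH f Sf uf fn.
case: (classic (A f)) => [Af|nAf]; first exact: (atom_atomic (@ps_mulr1 L)).
have [b [c [Sb Sc e ub uc]]] := not_atom Sf (ps_nz fn) uf nAf.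
have b0 : b 0%N = 0.
  by apply/eqP; apply/negPn/negP => h; exact: ub (field_unit sf Sb h).
have c0 : c 0%N = 0.
  by apply/eqP; apply/negPn/negP => h; exact: uc (field_unit sf Sc h).
have [i [ilt bi]] : exists i, (i < n)%N /\ b i != 0.
  apply: NNPP => H; move: fn; rewrite e ps_low ?eqxx // => i ilt.
  by apply/eqP; apply/negPn/negP => bi; apply: H; exists i.
have [j [jlt cj]] : exists j, (j < n)%N /\ c j != 0.
  apply: NNPP => H; move: fn; rewrite e ps_mulC ps_low ?eqxx // => j jlt.
  by apply/eqP; apply/negPn/negP => cj; apply: H; exists j.
rewrite e; apply: (atomicM (@ps_mulA L) (@ps_mul1 L) SM).
- exact: IH ilt b Sb ub bi.
- exact: IH jlt c Sc uc cj.
- by rewrite -e; exact: ps_nz fn.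
Qed.

Lemma ps_nonzero_ex f : f <> ps_zero L -> exists n, f n != 0.
Proof.
move=> h; apply: NNPP => H; apply: h; apply: functional_extensionality => n.
by apply/eqP; apply/negPn/negP => fn; apply: H; exists n.
Qed.

Theorem CA_ps_field : subfield_of D ->
  completelyAtomic (@ps_mul L) (ps_one L) (ps_zero L) S.
Proof.
move=> sf a b c [Sa a0 _ _] Sb Sc e ub.
have b0 : b <> ps_zero L by move=> bz; apply: a0; rewrite e bz ps_mul0.
have [n bn] := ps_nonzero_ex b0.
exact: field_atomic sf n b Sb ub bn.
Qed.

Lemma nonfield_ex : ~ subfield_of D -> exists x, [/\ x \in D, x != 0 & x^-1 \notin D].
Proof.
move=> h; apply: NNPP => H; apply: h => x xD x0; apply/negPn/negP => xi; apply: H.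
by exists x.
Qed.

Lemma psC_split x g : x != 0 -> g = ps_mul (psC x) (ps_mul (psC x^-1) g).
Proof.
move=> x0; apply: functional_extensionality => n.
by rewrite !ps_mulC_l mulrA mulfV // mul1r.
Qed.

Lemma atom_nz0 (nf : ~ subfield_of D) a : A a -> a 0%N != 0.
Proof.
move=> [Sa a0 ua H]; apply/negP => /eqP az.
have [x [xD x0 xi]] := nonfield_ex nf.
have Sx : S (psC x) by [].
have Sy : S (ps_mul (psC x^-1) a) by rewrite /inDXLXX ps_mulC_l az mulr0.
case: (H _ _ Sx Sy (psC_split a x0)).
- move/(ps_unitP Sx) => [_ [w [Dw xw]]].
  have : x^-1 = w by rewrite -[w]mul1r -(mulVf x0) -mulrA xw mulr1.
  by move=> ew; move: xi; rewrite ew Dw.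
- move/(ps_unitP Sy) => [_ [w [_]]]; rewrite ps_mulC_l az mulr0 mul0r.
  by move/eqP; rewrite eq_sym oner_eq0.
Qed.

Lemma atomic_nz0 (nf : ~ subfield_of D) a : AE a -> a 0%N != 0.
Proof.
case=> _ _ _ [s [_ [As ->]]]; elim: s As => [|x s IH] /=.
  by rewrite /ps_one /= oner_eq0.
by case=> Ax As; rewrite ps_mul_0 mulf_neq0 //; [exact: atom_nz0 | exact: IH].
Qed.

Lemma prodD s : allAtoms (@GRing.mul L) 1 0 (fun x => x \in D) s -> foldr *%R 1 s \in D.
Proof.
elim: s => [|x s IH] //= [[xD _ _ _] As]; exact: DM xD (IH As).
Qed.

Lemma Dlist_atomic s : s <> [::] -> allAtoms (@GRing.mul L) 1 0 (fun x => x \in D) s ->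
  forall g, S g -> g 0%N = foldr *%R 1 s -> g 0%N != 0 -> AE g.
Proof.
elim: s => [//|x s IH] _ [Ax As] g Sg gE g0.
case: s IH As gE => [|y s] IH As gE.
  apply: (atom_atomic (@ps_mulr1 L)); apply: atom_Datom => //.
  by rewrite gE /= mulr1.
have x0 : x != 0 by case: Ax => _ ? _ _; apply/eqP.
rewrite (psC_split g x0); apply: (atomicM (@ps_mulA L) (@ps_mul1 L) SM).
- apply: (atom_atomic (@ps_mulr1 L)); apply: atom_Datom => //.
  by case: Ax.
- apply: IH => //.
  + rewrite /inDXLXX ps_mulC_l gE /= mulKf //; exact: (prodD (s := y :: s)).
  + by rewrite ps_mulC_l gE /= mulKf.
  + by rewrite ps_mulC_l mulf_neq0 // invr_neq0.
- by rewrite -psC_split //; exact: (@ps_nz _ 0%N).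
Qed.

Theorem CA_ps_nonfield : ~ subfield_of D ->
  atomicDom (@GRing.mul L) 1 0 (fun x => x \in D) ->
  completelyAtomic (@ps_mul L) (ps_one L) (ps_zero L) S.
Proof.
move=> nf aD a b c Aa Sb Sc e ub.
have a0 := atomic_nz0 nf Aa.
have b0 : b 0%N != 0.
  by move: a0; rewrite e ps_mul_0; apply: contraNneq => ->; rewrite mul0r.
have nub : ~ DU (b 0%N) by move/(ps_unitP Sb).
have [_ _ _ [s [s0 [As bE]]]] := aD (b 0%N) Sb (elimN eqP b0) nub.
exact: Dlist_atomic s0 As b Sb bE b0.
Qed.

End PSD.

Section PolyD.
Variables (L : fieldType) (D : {pred L}) (hD : GRing.subring_closed D).

Let D1 : 1 \in D. Proof. by case: hD. Qed.
Let DM x y : x \in D -> y \in D -> x * y \in D.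
Proof. by case: hD => _ _ h; apply: h. Qed.
Let D0 : 0 \in D. Proof. by case: hD => h1 h _; rewrite -(subrr 1); apply: h. Qed.

Implicit Types p q a b c g h : {poly L}.
Local Notation S := (inDXLX D).
Local Notation U := (unitIn (@GRing.mul {poly L}) 1 S).
Local Notation A := (atomIn (@GRing.mul {poly L}) 1 0 S).
Local Notation AE := (atomicElt (@GRing.mul {poly L}) 1 0 S).
Local Notation DU := (unitIn (@GRing.mul L) 1 (fun x => x \in D)).
Local Notation DA := (atomIn (@GRing.mul L) 1 0 (fun x => x \in D)).

Let SM p q : S p -> S q -> S (p * q).
Proof. rewrite /inDXLX coef0M; exact: DM. Qed.

Let mA := (@mulrA {poly L}).
Let m1 := (@mul1r {poly L}).
Let mr1 := (@mulr1 {poly L}).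
Let m0 := (@mul0r {poly L}).

Lemma sizeM p q : p != 0 -> q != 0 ->
  [/\ size (p * q) = (size p + size q).-1, (0 < size p)%N & (0 < size q)%N].
Proof. by move=> p0 q0; rewrite size_mul // !size_poly_gt0 p0 q0. Qed.

Lemma punitP p : S p -> U p <-> (size p <= 1)%N /\ DU p`_0.
Proof.
move=> Sp; split.
- case=> _ [q [Sq e]].
  have p0 : p != 0 by apply: contra_eq_neq e => ->; rewrite mul0r eq_sym oner_eq0.
  have q0 : q != 0 by apply: contra_eq_neq e => ->; rewrite mulr0 eq_sym oner_eq0.
  split.
    have s1 : size (p * q) = 1%N by rewrite e; exact: size_poly1.
    have [] := sizeM p0 q0; rewrite s1 => *; lia.
  split => //; exists q`_0; split => //; by rewrite -coef0M e coef1.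
- case=> sp [_ [e [De pe]]]; split => //; exists e%:P; split.
    by rewrite /inDXLX coefC.
  by rewrite (size1_polyC sp) -polyCM pe polyC1.
Qed.

Lemma pnz p : p`_0 != 0 -> p != 0.
Proof. by apply: contra_neq => ->; rewrite coef0. Qed.

Lemma poly_mul_ne0 p q : p * q != 0 -> p != 0 /\ q != 0.
Proof.
move=> h; split; apply: contra_neq h => ->; by rewrite ?mul0r ?mulr0.
Qed.

Lemma field_punit p : subfield_of D -> S p -> p != 0 -> (size p <= 1)%N -> U p.
Proof.
move=> sf Sp p0 sp; apply/(punitP Sp); split; first exact: sp.
split; first exact: Sp.
have pc0 : p`_0 != 0 by move: p0; rewrite {1}(size1_polyC sp) polyC_eq0.
exists (p`_0)^-1; split; [exact: sf | exact: mulfV].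
Qed.

Lemma field_patomic (sf : subfield_of D) n : forall p, size p = n -> S p -> p != 0 -> ~ U p -> AE p.
Proof.
elim/ltn_ind: n => n IH p sp Sp p0 up.
case: (classic (A p)) => [Ap|nAp]; first exact: (atom_atomic mr1).
have [b [c [Sb Sc e ub uc]]] := not_atom Sp (elimN eqP p0) up nAp.
have [b0 c0] : b != 0 /\ c != 0 by apply: poly_mul_ne0; rewrite -e.
have sb : (1 < size b)%N by rewrite ltnNge; apply/negP => h; exact: ub (field_punit sf Sb b0 h).
have sc : (1 < size c)%N by rewrite ltnNge; apply/negP => h; exact: uc (field_punit sf Sc c0 h).
have [sbc _ _] := sizeM b0 c0; rewrite -e sp in sbc.
rewrite e; apply: (atomicM mA m1 SM).
- apply: (IH (size b)) => //; lia.
- apply: (IH (size c)) => //; lia.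
- by rewrite -e; apply/eqP.
Qed.

Theorem CA_poly_field : subfield_of D -> completelyAtomic (@GRing.mul {poly L}) 1 0 S.
Proof.
move=> sf a b c [Sa a0 _ _] Sb Sc e ub.
have b0 : b != 0 by apply/eqP => bz; apply: a0; rewrite e bz mul0r.
exact: field_patomic sf (size b) b erefl Sb b0 ub.
Qed.

Lemma nonfield_ex' : ~ subfield_of D -> exists x, [/\ x \in D, x != 0 & x^-1 \notin D].
Proof.
move=> h; apply: NNPP => H; apply: h => x xD x0; apply/negPn/negP => xi; apply: H.
by exists x.
Qed.

Lemma polyC_split x g : x != 0 -> g = x%:P * (x^-1%:P * g).
Proof. by move=> x0; rewrite mulrA -polyCM mulfV // polyC1 mul1r. Qed.

Lemma patom_nz0 (nf : ~ subfield_of D) a : A a -> a`_0 != 0.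
Proof.
move=> [Sa a0 ua H]; apply/negP => /eqP az.
have [x [xD x0 xi]] := nonfield_ex' nf.
have Sx : S x%:P by rewrite /inDXLX coefC.
have Sy : S (x^-1%:P * a) by rewrite /inDXLX coefCM az mulr0.
case: (H _ _ Sx Sy (polyC_split a x0)).
- move/(punitP Sx) => [_ [_ [w [Dw]]]]; rewrite coefC /= => xw.
  have : x^-1 = w by rewrite -[w]mul1r -(mulVf x0) -mulrA xw mulr1.
  by move=> ew; move: xi; rewrite ew Dw.
- move/(punitP Sy) => [_ [_ [w [_]]]]; rewrite coefCM az mulr0 mul0r.
  by move/eqP; rewrite eq_sym oner_eq0.
Qed.

Lemma patomic_nz0 (nf : ~ subfield_of D) a : AE a -> a`_0 != 0.
Proof.
case=> _ _ _ [s [_ [As ->]]]; elim: s As => [|x s IH] /=.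
  by rewrite coef1 /= oner_eq0.
by case=> Ax As; rewrite coef0M mulf_neq0 //; [exact: patom_nz0 | exact: IH].
Qed.

Lemma prodD' s : allAtoms (@GRing.mul L) 1 0 (fun x => x \in D) s -> foldr *%R 1 s \in D.
Proof.
elim: s => [|x s IH] //= [[xD _ _ _] As]; exact: DM xD (IH As).
Qed.

Lemma atom_Dpoly g : S g -> (size g <= 1)%N -> DA g`_0 -> A g.
Proof.
move=> Sg sg [Dg g0 nu H]; have gn0 : g != 0 by apply: pnz; apply/eqP.
split => //.
- exact/eqP.
- by move/(punitP Sg) => [].
- move=> b c Sb Sc e.
  have [b0 c0] : b != 0 /\ c != 0 by apply: poly_mul_ne0; rewrite -e.
  have [sbc _ _] := sizeM b0 c0; rewrite -e in sbc.
  have := size_poly_gt0 b; have := size_poly_gt0 c; have := size_poly_gt0 g.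
  rewrite b0 c0 gn0 => hg hc hb.
  have ge : g`_0 = b`_0 * c`_0 by rewrite e coef0M.
  case: (H _ _ Sb Sc ge) => h; [left|right]; apply/punitP => //; split => //; lia.
Qed.

Lemma Dlist_patomic s : s <> [::] -> allAtoms (@GRing.mul L) 1 0 (fun x => x \in D) s ->
  forall g, S g -> (size g <= 1)%N -> g`_0 = foldr *%R 1 s -> g`_0 != 0 -> AE g.
Proof.
elim: s => [//|x s IH] _ [Ax As] g Sg sg gE g0.
case: s IH As gE => [|y s] IH As gE.
  apply: (atom_atomic mr1); apply: atom_Dpoly => //.
  by rewrite gE /= mulr1.
have x0 : x != 0 by case: Ax => _ ? _ _; apply/eqP.
rewrite (polyC_split g x0); apply: (atomicM mA m1 SM).
- apply: (atom_atomic mr1); apply: atom_Dpoly => //.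
  + by rewrite /inDXLX coefC; case: Ax.
  + by rewrite size_polyC leq_b1.
  + by rewrite coefC.
- apply: IH => //.
  + rewrite /inDXLX coefCM gE /= mulKf //; exact: (prodD' (s := y :: s)).
  + by rewrite size_Cmul // invr_neq0.
  + by rewrite coefCM gE /= mulKf.
  + by rewrite coefCM mulf_neq0 // invr_neq0.
- by rewrite -polyC_split //; apply/eqP; apply: pnz.
Qed.

Lemma monic0_atomic n : forall h, size h = n -> h`_0 = 1 -> (1 < size h)%N -> AE h.
Proof.
elim/ltn_ind: n => n IH h sh h0 sh2.
have Sh : S h by rewrite /inDXLX h0.
have hn0 : h != 0 by rewrite -size_poly_gt0; lia.
have uh : ~ U h by move/(punitP Sh) => [] ?; lia.
case: (classic (A h)) => [Ah|nAh]; first exact: (atom_atomic mr1).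
have [b [c [Sb Sc e ub uc]]] := not_atom Sh (elimN eqP hn0) uh nAh.
have [b0 c0] : b != 0 /\ c != 0 by apply: poly_mul_ne0; rewrite -e.
have bc1 : b`_0 * c`_0 = 1 by rewrite -coef0M -e.
have cb1 : c`_0 * b`_0 = 1 by rewrite mulrC.
have bc0 : b`_0 != 0 by apply: contra_eq_neq bc1 => ->; rewrite mul0r eq_sym oner_eq0.
have cc0 : c`_0 != 0 by apply: contra_eq_neq bc1 => ->; rewrite mulr0 eq_sym oner_eq0.
have sb : (1 < size b)%N.
  rewrite ltnNge; apply/negP => h1; apply: ub; apply/punitP => //; split => //.
  by split => //; exists c`_0.
have sc : (1 < size c)%N.
  rewrite ltnNge; apply/negP => h1; apply: uc; apply/punitP => //; split => //.
  by split => //; exists b`_0.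
have [sbc _ _] := sizeM b0 c0; rewrite -e sh in sbc.
have -> : h = ((c`_0)%:P * b) * ((b`_0)%:P * c).
  by rewrite mulrACA -polyCM cb1 polyC1 mul1r.
apply: (atomicM mA m1 SM).
- apply: (IH (size b)); first lia.
  + by rewrite size_Cmul.
  + by rewrite coefCM mulrC.
  + by rewrite size_Cmul.
- apply: (IH (size c)); first lia.
  + by rewrite size_Cmul.
  + by rewrite coefCM mulrC.
  + by rewrite size_Cmul.
- by rewrite mulrACA -polyCM cb1 polyC1 mul1r -e; apply/eqP.
Qed.

Lemma main_patomic (aD : atomicDom (@GRing.mul L) 1 0 (fun x => x \in D)) b :
  S b -> b`_0 != 0 -> ~ U b -> AE b.
Proof.
move=> Sb b0 ub.
have bn0 : b != 0 by apply: pnz.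
have Cat : ~ DU b`_0 -> AE (b`_0)%:P.
  move=> nu; have [_ _ _ [s [s0 [As bE]]]] := aD _ Sb (elimN eqP b0) nu.
  apply: (Dlist_patomic s0 As) => //.
  + by rewrite /inDXLX coefC.
  + by rewrite size_polyC leq_b1.
  + by rewrite coefC.
  + by rewrite coefC.
case: (leqP (size b) 1) => sb.
  have nu : ~ DU b`_0 by move=> h; apply: ub; apply/punitP.
  by rewrite (size1_polyC sb); exact: Cat.
set h := (b`_0)^-1%:P * b.
have hE : b = (b`_0)%:P * h by rewrite /h mulrA -polyCM mulfV // polyC1 mul1r.
have Ah : AE h.
  apply: (monic0_atomic (n := size h)) => //.
  + by rewrite /h coefCM mulVf.
  + by rewrite /h size_Cmul // invr_neq0.
case: (classic (DU b`_0)) => [du | ndu]; last first.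
  rewrite hE; apply: (atomicM mA m1 SM) => //; first exact: Cat.
  by rewrite -hE; apply/eqP.
case: Ah => Sh h0 uh [s [sn [As hs]]].
case: s sn As hs => [//|a1 s] _ [Aa1 As] hs.
have Ub : U (b`_0)%:P.
  apply/punitP; first by rewrite /inDXLX coefC.
  by rewrite size_polyC leq_b1 coefC.
split => //.
- exact/eqP.
- exists ((a1 * (b`_0)%:P) :: s); split => //; split.
    split => //; exact: (atomMu mA mr1 m0 SM).
  by rewrite /= {1}hE hs /= mulrCA mulrA.
Qed.

Theorem CA_poly_nonfield : ~ subfield_of D ->
  atomicDom (@GRing.mul L) 1 0 (fun x => x \in D) ->
  completelyAtomic (@GRing.mul {poly L}) 1 0 S.
Proof.
move=> nf aD a b c Aa Sb Sc e ub.
have a0 := patomic_nz0 nf Aa.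
have b0 : b`_0 != 0.
  by move: a0; rewrite e coef0M; apply: contraNneq => ->; rewrite mul0r.
exact: main_patomic.
Qed.

End PolyD.


Theorem corollary3p2 (L : fieldType) (D : {pred L}) :
  GRing.subring_closed D ->
  let CA_R := completelyAtomic (@GRing.mul {poly L}) 1 0 (inDXLX D) in
  let CA_R' := completelyAtomic (@ps_mul L) (ps_one L) (ps_zero L) (inDXLXX D) in
  (subfield_of D -> CA_R /\ CA_R') /\
  (~ subfield_of D ->
     atomicDom (@GRing.mul L) 1 0 (fun x => x \in D) -> CA_R /\ CA_R').
Proof.
move=> hD CA_R CA_R'; rewrite /CA_R /CA_R'; split.
- move=> sf; split; [exact: CA_poly_field | exact: CA_ps_field].
- move=> nf aD; split; [exact: CA_poly_nonfield | exact: CA_ps_nonfield].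
Qed.
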